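(* Let $\nu_n,\nu\in\Delta(V)$ with $\nu_n\to\nu$ weakly, and let $p_n,p\in V$ with $p_n\to p$. Then $\pi(c,\nu,p)\ge\limsup_{n\to\infty}\pi(c,\nu_n,p_n)$.
   Context: $V\subset\mathbb{R}$ is compact and $c:V\to\mathbb{R}$ is continuous with $v-c(v)\ge0$ on $V$. $\Delta(V)$ denotes Borel probability measures on $V$. For $\nu\in\Delta(V)$ and $p\in V$, $\pi(c,\nu,p)=\int_{\{v\ge p\}}(p-c(v))\nu(dv)$. *)

(* Defs.v *)
From HB Require Import structures.
From mathcomp Require Import all_boot all_order all_algebra.
From mathcomp Require Import all_classical all_reals all_analysis.
Set Implicit Arguments. Unset Strict Implicit. Unset Printing Implicit Defensive.
Import Order.TTheory GRing.Theory Num.Theory.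
Import numFieldNormedType.Exports.
Local Open Scope classical_set_scope.
Local Open Scope ring_scope.

(* Delta(V): Borel probability measures on R concentrated on V
   (equivalently, Borel probability measures on V). *)
Definition in_Delta (R : realType) (V : set R) (nu : probability R R) : Prop :=
  nu (~` V) = 0%E.

(* Weak convergence on V: integrals of every continuous (hence bounded, V being
   compact) real function on V converge. *)
Definition weak_conv (R : realType) (V : set R)
    (nu_ : nat -> probability R R) (nu : probability R R) : Prop :=
  forall f : R -> R, {within V, continuous f} ->
    ((fun n => \int[nu_ n]_(x in V) (f x)%:E) @ \oo --> \int[nu]_(x in V) (f x)%:E)%E.

Definition profit (R : realType) (V : set R) (c : R -> R)
    (nu : probability R R) (p : R) : \bar R :=
  (\int[nu]_(v in V `&` [set v | (p <= v)%R]) (p - c v)%R%:E)%E.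

(* Main.v *)
Require Import Defs.
From HB Require Import structures.
From mathcomp Require Import all_boot all_order all_algebra.
From mathcomp Require Import all_classical all_reals all_analysis.
From mathcomp Require Import ring lra.
Import Order.TTheory GRing.Theory Num.Theory.
Import numFieldNormedType.Exports.
Local Open Scope classical_set_scope.
Local Open Scope ring_scope.
Lemma cont_bnd {R : realType} (V : set R) (f : R -> R) :
  compact V -> {within V, continuous f} -> exists M, forall v, V v -> `|f v| <= M.
Proof.
move=> cV fc; have := compact_bounded (continuous_compact fc cV).
case=> M [_ HM]; exists (M + 1) => v Vv.
by apply: (HM (M+1)); [rewrite ltrDl|exists v].
Qed.

Lemma bnd_int {R : realType} (P : probability R R) (V : set R) (f : R -> R) M :
  measurable V -> measurable_fun V f -> (forall v, V v -> `|f v| <= M) ->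
  P.-integrable V (EFin \o f).
Proof.
move=> mV mf fM; apply: (le_integrable mV _ _ (finite_measure_integrable_cst P M mV)).
  exact/measurable_realfun.measurable_EFinP.
move=> x Vx /=; rewrite lee_fin (le_trans (fM x Vx))//.
exact: ler_norm.
Qed.

Lemma limn_esup_ev {R : realType} (u : (\bar R)^nat) (b : \bar R) :
  (\forall n \near \oo, (u n <= b)%E) -> (limn_esup u <= b)%E.
Proof.
move=> [N _ HN]; rewrite limn_esup_lim; apply: lime_le; first exact: is_cvg_esups.
near=> m; apply: ge_ereal_sup => _ [k /= mk <-]; apply: HN => /=.
rewrite (leq_trans _ mk)//; near: m; exists N => //.
Unshelve. all: by end_near. Qed.

Definition phi {R : realType} (p d v : R) : R :=
  Num.min 1 (Num.max 0 ((v - p + 2 * d) / d)).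
Definition Hf {R : realType} (c : R -> R) (p d v : R) : R :=
  - Num.max (v - p) 0 + (v - c v) * phi p d v.

Lemma phi_ge0 {R : realType} (p d v : R) : 0 <= phi p d v.
Proof. by rewrite /phi le_min ler01 le_max lexx. Qed.

Lemma phi_le1 {R : realType} (p d v : R) : phi p d v <= 1.
Proof. by rewrite /phi ge_min lexx. Qed.

Lemma phi1 (R : realType) (p d v : R) : 0 < d -> p - d <= v -> phi p d v = 1.
Proof.
move=> d0 h; rewrite /phi; apply/eqP; rewrite eq_le ge_min lexx /= le_min lexx /=.
rewrite le_max; apply/orP; right; rewrite ler_pdivlMr//; lra.
Qed.

Lemma phi0 (R : realType) (p d v : R) : 0 < d -> v <= p - 2 * d -> phi p d v = 0.
Proof.
move=> d0 h; rewrite /phi; have -> : Num.max 0 ((v - p + 2 * d) / d) = 0.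
  apply/eqP; rewrite eq_le ge_max lexx /= le_max lexx /= andbT.
  rewrite ler_pdivrMr//; lra.
by apply/eqP; rewrite eq_le ge_min lexx orbT /= le_min ler01 lexx.
Qed.

Lemma K1 (R : realType) (c : R -> R) (p q d v : R) :
  0 < d -> 0 <= v - c v -> `|q - p| < d ->
  (if q <= v then q - c v else 0) <= Hf c p d v + `|q - p|.
Proof.
move=> d0 w0 qp; rewrite /Hf.
have := ler_norm (q - p); have := ler_norm (p - q); rewrite distrC => h1 h2.
case: ifPn => qv.
  rewrite phi1//; last lra.
  have : Num.max (v - p) 0 <= v - q + `|q - p|.
    rewrite ge_max; apply/andP; split; lra.
  lra.
have : Num.max (v - p) 0 <= `|q - p|.
  rewrite ge_max; apply/andP; split; [rewrite -ltNge in qv; lra | exact: normr_ge0].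
have := mulr_ge0 w0 (phi_ge0 p d v); lra.
Qed.

Lemma K2 (R : realType) (c : R -> R) (p d v W : R) :
  0 < d -> 0 <= v - c v -> v - c v <= W ->
  Hf c p d v <= (if p <= v then p - c v else 0) +
                (if (p - 2 * d <= v) && (v < p) then W else 0).
Proof.
move=> d0 w0 wW; rewrite /Hf.
case: ifPn => pv.
  rewrite phi1//; last lra.
  have -> : Num.max (v - p) 0 = v - p by apply/max_idPl; lra.
  rewrite ifF; first lra.
  by apply/negbTE; rewrite negb_and -leNgt pv orbT.
rewrite -ltNge in pv.
have -> : Num.max (v - p) 0 = 0 by apply/max_idPr; lra.
case: ifPn => h.
  have := ler_pM w0 (phi_ge0 p d v) wW (phi_le1 p d v); lra.
rewrite negb_and pv orbF -ltNge in h.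
rewrite phi0//; [lra|lra].
Qed.

Lemma phi_cont {R : realType} (p d : R) : continuous (phi p d).
Proof.
move=> x; rewrite /phi.
apply: (continuous_min (f := cst 1) (g := fun v => Num.max 0 ((v - p + 2 * d) / d))).
  exact: cvg_cst.
apply: (continuous_max (f := cst 0) (g := fun v => ((v - p + 2 * d) / d))).
  exact: cvg_cst.
apply: cvgM; last exact: cvg_cst.
apply: cvgD; last exact: cvg_cst.
apply: cvgB; [exact: cvg_id | exact: cvg_cst].
Qed.

Lemma Hf_cont {R : realType} (V : set R) (c : R -> R) (p d : R) :
  {within V, continuous c} -> {within V, continuous (Hf c p d)}.
Proof.
move=> cc x; rewrite /Hf.
have c1 : {within V, continuous (fun v : R => - Num.max (v - p) 0)}.
  apply: continuous_subspaceT => y.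
  apply: cvgN.
  apply: (continuous_max (f := fun v => v - p) (g := cst 0)); last exact: cvg_cst.
  apply: cvgB; [exact: cvg_id | exact: cvg_cst].
have c2 : {within V, continuous (phi p d)} by exact: continuous_subspaceT (phi_cont p d).
have c3 : {within V, continuous (fun v : R => v)}.
  by apply: continuous_subspaceT => y; exact: cvg_id.
apply: cvgD; first exact: c1.
apply: cvgM; last exact: c2.
apply: cvgB; [exact: c3 | exact: cc].
Qed.

Lemma in_set_bool {T : Type} (P : T -> bool) x : (x \in [set y | P y]) = P x.
Proof. by apply/idP/idP => [/set_mem|/mem_set]. Qed.

Lemma EFin_if {R : realType} (b : bool) (x : R) :
  (if b then x%:E else 0%E) = (if b then x else 0)%:E.
Proof. by case: b. Qed.

Lemma mset_ge {R : realType} (q : R) : measurable [set v : R | q <= v].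
Proof.
have -> : [set v : R | q <= v] = `[q, +oo[%classic.
  by apply/seteqP; split => x /=; rewrite in_itv /= andbT.
exact: measurable_itv.
Qed.

Lemma mset_co {R : realType} (a b : R) : measurable [set v : R | a <= v < b].
Proof.
have -> : [set v : R | a <= v < b] = `[a, b[%classic.
  by apply/seteqP; split => x /=; rewrite in_itv.
exact: measurable_itv.
Qed.

Theorem lemmaI3 (R : realType) (V : set R) (c : R -> R)
  (nu_ : nat -> probability R R) (nu : probability R R)
  (p_ : nat -> R) (p : R) :
  compact V ->
  {within V, continuous c} ->
  (forall v, V v -> 0 <= v - c v) ->
  (forall n, in_Delta V (nu_ n)) -> in_Delta V nu ->
  weak_conv V nu_ nu ->
  (forall n, V (p_ n)) -> V p ->
  p_ @ \oo --> p ->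
  (limn_esup (fun n => profit V c (nu_ n) (p_ n)) <= profit V c nu p)%E.
Proof.
move=> cV cc wpos _ _ wk Vpn Vp pnp.
have mV : measurable V := measurable_realfun.compact_measurable cV.
have mc : measurable_fun V c := measurable_realfun.subspace_continuous_measurable_fun mV cc.
have wcont : {within V, continuous (fun v => v - c v)}.
  move=> x; apply: cvgB; last exact: cc.
  by apply: continuous_subspaceT => y; exact: cvg_id.
have [W hW] := cont_bnd _ _ cV wcont.
have [Cb hC] := cont_bnd _ _ cV cc.
have gint : forall (P : probability R R) q,
    P.-integrable V ((fun v => (q - c v)%:E) \_ [set v | q <= v]).
  move=> P q; apply: (proj1 (integrable_restrict _ (mset_ge q) mV _)).
  apply: (@bnd_int _ _ _ (fun v => q - c v) (`|q| + Cb)).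
  - exact: measurableI mV (mset_ge q).
  - apply: (measurable_funS mV); first exact: subIsetl.
    exact: measurable_realfun.measurable_funB.
  - move=> v [Vv _]; rewrite (le_trans (ler_normB _ _))// lerD2l; exact: hC.
have profE : forall P q, profit V c P q =
    (\int[P]_(v in V) ((fun v => (q - c v)%:E) \_ [set v | (q <= v)%R]) v)%E.
  by move=> P q; rewrite /profit integral_mkcondr.
have Hint : forall (P : probability R R) d, P.-integrable V (EFin \o Hf c p d).
  move=> P d; have [M hM] := cont_bnd _ _ cV (@Hf_cont _ V c p d cc).
  apply: (@bnd_int _ P V (Hf c p d) M) => //.
  exact: measurable_realfun.subspace_continuous_measurable_fun mV (@Hf_cont _ V c p d cc).
apply/lee_addgt0Pr => e e0.
set S := fun k : nat => V `&` [set v | p - k.+1%:R^-1 <= v < p].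
have mS : forall k, measurable (S k) := fun k => measurableI _ _ mV (mset_co _ _).
have S0 : \bigcap_k S k = set0.
  apply/seteqP; split => [v Sv|v //].
  have [_ /andP[_ vp]] := Sv 0%N I.
  have pv0 : 0 < p - v by lra.
  have [N _ HN] := near_infty_natSinv_lt (PosNum pv0).
  have := HN N (leqnn N); have [_ /andP[h _]] := Sv N I => /= hN.
  move: h hN; set x := (N.+1%:R^-1 : R) => h hN.
  suff : x < x by rewrite ltxx. lra.
have h0 : (nu (S 0%N) < +oo)%E.
  by rewrite (le_lt_trans (probability_le1 _ (mS 0%N))) // ltry.
have hb : measurable (\bigcap_k S k) by rewrite S0.
have hm : {homo S : n k / (n <= k)%N >-> (k <= n)%O}.
  move=> n k nk; apply/subsetPset => v [Vv /andP[h1 h2]]; split => //.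
  apply/andP; split => //; apply: le_trans h1; rewrite lerD2l lerN2.
  by rewrite lef_pV2 ?posrE ?ltr0Sn // ler_nat.
have Scvg := nonincreasing_cvg_mu h0 mS hb hm.
rewrite S0 measure0 in Scvg.
have /fine_cvgP[_ Sf] := Scvg.
set eps := e / (3 * (`|W| + 1)).
have eps0 : 0 < eps.
  by rewrite /eps divr_gt0 // mulr_gt0 // ltr_pwDr // normr_ge0.
have [N _ HN] := cvgr_lt _ Sf _ eps0.
have mN := HN N (leqnn N); rewrite /= in mN.
set m := fine (nu (S N)) in mN.
have nuSE : nu (S N) = m%:E by rewrite fineK // fin_num_measure.
have m0 : 0 <= m by rewrite /m fine_ge0 // measure_ge0.
have Wm : W * m < e / 3.
  have h1 : W * m <= (`|W| + 1) * m.
    by apply: ler_wpM2r => //; have := ler_norm W; lra.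
  have h2 : (`|W| + 1) * m < (`|W| + 1) * eps.
    by rewrite ltr_pM2l // ltr_pwDr // normr_ge0.
  have h3 : (`|W| + 1) * eps = e / 3.
    rewrite /eps; field; have := normr_ge0 W; lra.
  lra.
set d := N.+1%:R^-1 / 2 : R.
have d0 : 0 < d by rewrite /d divr_gt0 // invr_gt0 ltr0Sn.
have two_d : 2 * d = N.+1%:R^-1 by rewrite /d mulrCA divff ?mulr1.
set L := (\int[nu]_(v in V) (Hf c p d v)%:E)%E.
have prfin : profit V c nu p \is a fin_num.
  by rewrite profE; apply: integrable_fin_num => //; exact: gint.
have Lfin : L \is a fin_num by apply: integrable_fin_num => //; exact: Hint.
have L_le : (L <= profit V c nu p + (W * m)%:E)%E.
  have cint : nu.-integrable V ((fun=> W%:E) \_ [set v | p - 2 * d <= v < p]).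
    apply: (proj1 (integrable_restrict _ (mset_co _ _) mV _)).
    exact: finite_measure_integrable_cst _ _ (measurableI _ _ mV (mset_co _ _)).
  rewrite profE.
  have -> : (W * m)%:E =
      (\int[nu]_(v in V) ((fun=> W%:E) \_ [set v | (p - 2 * d <= v < p)%R]) v)%E.
    rewrite -integral_mkcondr integral_cst; last exact: measurableI mV (mset_co _ _).
    rewrite two_d (_ : V `&` [set v | (p - N.+1%:R^-1 <= v < p)%R] = S N) //.
    by rewrite EFinM; congr (_ * _)%E; exact: esym nuSE.
  rewrite -integralD //; [|exact: gint].
  apply: le_integral => //; [exact: Hint| |].
  exact: (integrableD mV (gint nu p) cint).
  move=> v /set_mem Vv /=; rewrite !patchE !in_set_bool /= !EFin_if -EFinD lee_fin.
  apply: K2 => //; [exact: wpos | exact: le_trans (ler_norm _) (hW v Vv)].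
have wkH := wk (Hf c p d) (@Hf_cont _ V c p d cc).
rewrite -/L -(fineK Lfin) in wkH.
have /fine_cvgP[_ wf] := wkH.
have e30 : 0 < e / 3 by rewrite divr_gt0.
have lt1 : fine L < fine L + e / 3 by rewrite ltrDl.
have md0 : 0 < Num.min d (e / 3) by rewrite lt_min d0 e30.
have ev1 := cvgr_lt _ wf _ lt1.
have ev2 := cvgr_dist_lt _ _ pnp _ md0.
apply: limn_esup_ev.
near=> n.
have h1 : fine (\int[nu_ n]_(v in V) (Hf c p d v)%:E)%E < fine L + e / 3.
  by near: n; exact: ev1.
have h2 : `|p - p_ n| < Num.min d (e / 3) by near: n; exact: ev2.
have h2d : `|p_ n - p| < d by rewrite distrC; move: h2; rewrite lt_min => /andP[].
have h2e : `|p_ n - p| < e / 3 by rewrite distrC; move: h2; rewrite lt_min => /andP[].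
rewrite profE.
set a := `|p_ n - p|.
have aint : (nu_ n).-integrable V (fun=> a%:E).
  exact: finite_measure_integrable_cst _ _ mV.
have ineq : (\int[nu_ n]_(v in V)
      ((fun v => (p_ n - c v)%:E) \_ [set v | (p_ n <= v)%R]) v <=
    \int[nu_ n]_(v in V) ((Hf c p d v)%:E + a%:E))%E.
  apply: le_integral => //; [exact: gint | exact: (integrableD mV (Hint (nu_ n) d) aint)|].
  move=> v /set_mem Vv /=; rewrite !patchE !in_set_bool /= !EFin_if -EFinD lee_fin.
  exact: K1 (wpos v Vv) h2d.
rewrite integralD // in ineq; last exact: Hint.
rewrite integral_cst // in ineq.
have aV : (a%:E * nu_ n V <= a%:E)%E.
  rewrite -[X in (_ <= X)%E]mule1; apply: lee_wpmul2l; first by rewrite lee_fin normr_ge0.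
  exact: probability_le1.
have Infin := integrable_fin_num mV (Hint (nu_ n) d).
rewrite -(fineK Infin) in ineq.
apply: (le_trans ineq); apply: (le_trans (leeD2l _ aV)).
rewrite -EFinD -(fineK prfin) -EFinD lee_fin.
rewrite -(fineK Lfin) -(fineK prfin) -EFinD lee_fin in L_le.
apply: (@le_trans _ _ (fine L + e / 3 + a)).
  by apply: lerD => //; exact: ltW h1.
rewrite /a; lra.
Unshelve. all: by end_near. Qed.
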